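(* Let $p$ be a prime, $k>0$ an integer and $q=p^k$. Let $B(X),C(X)\in\mathbb{F}_{q^3}[X]$ and $L(X)=\sum_{i=0}^r a_iX^{p^i}\in\mathbb{F}_q[X]$. Put \[ f(X)=L(X)+B(X)\circ(X^q-X)+(X^{q^2}+X^q+X)\circ C(X). \] Then $f(X)$ permutes $\mathbb{F}_{q^3}$ if and only if both of the following hold: (a) $L(X)+(X^q-X)\circ B(X)$ permutes the set $\Gamma$ of roots in $\mathbb{F}_{q^3}$ of $X^{q^2}+X^q+X$ (i.e. maps $\Gamma$ bijectively onto $\Gamma$); (b) $L(X)+(X^{q^2}+X^q+X)\circ C(X)$ is injective on $u+\mathbb{F}_q$ for every $u\in\mathbb{F}_{q^3}$.
   Context: $\circ$ denotes composition of polynomials. A polynomial permutes $\mathbb{F}_{q^3}$ if the induced map $\mathbb{F}_{q^3}\to\mathbb{F}_{q^3}$ is a bijection. *)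

(* Defs.v *)
From HB Require Import structures.
From mathcomp Require Import all_boot all_order all_algebra all_field.
Set Implicit Arguments. Unset Strict Implicit. Unset Printing Implicit Defensive.
Import GRing.Theory.
Local Open Scope ring_scope.

Definition in_Fq (F : finFieldType) (q : nat) (x : F) : bool := x ^+ q == x.

Definition trq (F : finFieldType) (q : nat) : {poly F} :=
  'X^(q ^ 2) + 'X^q + 'X.

Definition linpoly (F : finFieldType) (p r : nat) (a : nat -> F) : {poly F} :=
  \sum_(i < r.+1) a i *: 'X^(p ^ i).

Definition permutes_roots (F : finFieldType) (g P : {poly F}) : Prop :=
  [/\ (forall x, root P x -> root P g.[x]),
      (forall x y, root P x -> root P y -> g.[x] = g.[y] -> x = y)
    & (forall y, root P y -> exists2 x, root P x & g.[x] = y)].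

(* Main.v *)
Require Import Defs.
From HB Require Import structures.
From mathcomp Require Import all_boot all_order all_algebra all_field.
From mathcomp Require Import ring zify.
From Stdlib Require Import Lia.
Import GRing.Theory.
Local Open Scope ring_scope.

Section Aux.
Variables (F : finFieldType) (p k : nat).
Hypotheses (hp : prime p) (hk : (0 < k)%N) (hF : #|F| = ((p ^ k) ^ 3)%N).

Lemma chF : p \in [pchar F].
Proof. apply: (@card_finPcharP F p (k * 3)) => //. by rewrite hF expnM. Qed.

Lemma pn_gt0 n : (0 < p ^ n)%N.
Proof. by rewrite expn_gt0 prime_gt0. Qed.

Lemma frobD n (x y : F) : (x + y) ^+ (p ^ n) = x ^+ (p ^ n) + y ^+ (p ^ n).
Proof.
apply: exprDn_pchar. by rewrite (eq_pnat _ (pcharf_eq chF)) pnatX pnat_id.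
Qed.

Lemma frob0 n : (0 : F) ^+ (p ^ n) = 0.
Proof. by rewrite expr0n eqn0Ngt pn_gt0. Qed.

Lemma frobN n (x : F) : (- x) ^+ (p ^ n) = - x ^+ (p ^ n).
Proof. by apply/eqP; rewrite -addr_eq0 -frobD addNr frob0. Qed.

Lemma frobB n (x y : F) : (x - y) ^+ (p ^ n) = x ^+ (p ^ n) - y ^+ (p ^ n).
Proof. by rewrite frobD frobN. Qed.

Lemma sig3 (x : F) : x ^+ (p ^ k) ^+ (p ^ k) ^+ (p ^ k) = x.
Proof.
rewrite -!exprM -{2}(expf_card x) hF; congr (_ ^+ _);
by rewrite !expnS expn0 muln1 mulnA.
Qed.

End Aux.

Theorem lemma3p1 (p k : nat) (F : finFieldType)
  (hp : prime p) (hk : (0 < k)%N) (hF : #|F| = ((p ^ k) ^ 3)%N)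
  (B C : {poly F}) (r : nat) (a : nat -> F)
  (ha : forall i, in_Fq (p ^ k) (a i)) :
  let q := (p ^ k)%N in
  let L := linpoly p r a in
  let f := L + (B \Po ('X^q - 'X)) + (trq F q \Po C) in
  bijective (fun x : F => f.[x]) <->
  (permutes_roots (L + (('X^q - 'X) \Po B)) (trq F q) /\
   (forall u x y : F, in_Fq q x -> in_Fq q y ->
      (L + (trq F q \Po C)).[u + x] = (L + (trq F q \Po C)).[u + y] -> x = y)).
Proof.
move=> q L f.
pose sig (x : F) := x ^+ q.
have sigD x y : sig (x + y) = sig x + sig y by exact: (frobD F p k hp hF).
have sigB x y : sig (x - y) = sig x - sig y by exact: (frobB F p k hp hF).
have sigN x : sig (- x) = - sig x by exact: (frobN F p k hp hF).
have sig0 : sig 0 = 0 by exact: (frob0 F p hp).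
have sigM x y : sig (x * y) = sig x * sig y by rewrite /sig exprMn.
have sigV x : sig (x^-1) = (sig x)^-1 by rewrite /sig exprVn.
have sig3' x : sig (sig (sig x)) = x by exact: (sig3 F p k hF).
pose Tf x := sig (sig x) + sig x + x.
pose Psi x := sig x - x.
have Lfun x : L.[x] = \sum_(i < r.+1) a i * x ^+ (p ^ i).
  by rewrite /L /linpoly horner_sum; apply: eq_bigr => i _; rewrite hornerZ hornerXn.
have LD x y : L.[x + y] = L.[x] + L.[y].
  by rewrite !Lfun -big_split; apply: eq_bigr => i _; rewrite (frobD F p k hp hF) mulrDr.
have LB x y : L.[x - y] = L.[x] - L.[y].
  by rewrite !Lfun -sumrB; apply: eq_bigr => i _; rewrite (frobB F p k hp hF) mulrBr.
have L0 : L.[0] = 0.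
  by rewrite Lfun big1 // => i _; rewrite (frob0 F p hp) mulr0.
have sig_sum (I : Type) (rr : seq I) (P : pred I) (G : I -> F) :
    sig (\big[+%R/0]_(i <- rr | P i) G i) = \sum_(i <- rr | P i) sig (G i).
  by rewrite (big_morph sig sigD sig0).
have Lsig x : L.[sig x] = sig L.[x].
  rewrite !Lfun sig_sum; apply: eq_bigr => i _.
  rewrite sigM /sig (eqP (ha i)) -!exprM; congr (_ * _ ^+ _); exact: mulnC.
have hT x : (trq F q).[x] = Tf x.
  by rewrite /trq !hornerE -mulnn exprM.
have hPsi x : ('X^q - 'X).[x] = Psi x by rewrite !hornerE.
have hf x : f.[x] = L.[x] + B.[Psi x] + Tf C.[x].
  by rewrite !hornerD !horner_comp hPsi hT.

have hg y : (L + (('X^q - 'X) \Po B)).[y] = L.[y] + Psi B.[y].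
  by rewrite hornerD horner_comp hPsi.
have hh x : (L + (trq F q \Po C)).[x] = L.[x] + Tf C.[x].
  by rewrite hornerD horner_comp hT.
have PsiT z : Psi (Tf z) = 0.
  rewrite /Psi /Tf !sigD sig3'; ring.
have TPsi z : Tf (Psi z) = 0.
  rewrite /Psi /Tf !sigB sig3'; ring.
have PsiD x y : Psi (x + y) = Psi x + Psi y.
  rewrite /Psi sigD; ring.
have PsiL x : Psi L.[x] = L.[Psi x] by rewrite /Psi LB Lsig.
have TD x y : Tf (x + y) = Tf x + Tf y.
  rewrite /Tf !sigD; ring.
have TL x : Tf L.[x] = L.[Tf x] by rewrite /Tf !LD !Lsig.
have key x : Psi f.[x] = (L + (('X^q - 'X) \Po B)).[Psi x].
  by rewrite hf hg PsiD PsiT addr0 PsiD PsiL.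
have gT y : Tf y = 0 -> Tf (L + (('X^q - 'X) \Po B)).[y] = 0.
  by move=> Ty; rewrite hg TD TL Ty L0 TPsi addr0.
have fib u x : Psi x = 0 -> f.[u + x] = (L + (trq F q \Po C)).[u + x] + B.[Psi u].
  by move=> Px; rewrite hf hh PsiD Px addr0; ring.
have q1 : (1 < q)%N.
  by rewrite /q (leq_trans (prime_gt1 hp)) // -{1}(expn1 p) leq_pexp2l // prime_gt0.
have rootT y : root (trq F q) y = (Tf y == 0) by rewrite /root hT.
have inFqP x : in_Fq q x -> Psi x = 0.
  by move/eqP => h; rewrite /Psi /sig h subrr.
have Psi0 : Psi 0 = 0 by rewrite /Psi sig0 subrr.
have H90 y : Tf y = 0 -> exists z, Psi z = y.
  move=> Ty.
  have [t Tt] : exists t, Tf t != 0.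
    case: (pickP (fun t => Tf t != 0)) => [t Ht|H]; first by exists t.
    exfalso.
    have trq0 : trq F q = 0.
      apply: (roots_geq_poly_eq0 (rs := enum F)).
      - by apply/allP => t _; rewrite rootT; move: (H t) => /= /negbFE.
      - exact: enum_uniq.
      rewrite -cardT hF.
      have sz : (size (trq F q) <= (q*q).+1)%N.
        rewrite /trq -mulnn.
        apply: leq_trans (size_polyD _ _) _; rewrite geq_max; apply/andP; split.
          apply: leq_trans (size_polyD _ _) _; rewrite geq_max !size_polyXn.
          by apply/andP; split => //; rewrite ltnS; nia.
        by rewrite size_polyX; nia.
      apply: leq_trans sz _.
      by rewrite !expnS expn0 muln1; nia.
    have := congr1 (fun P : {poly F} => P`_(q*q)) trq0.
    have e1 : (q * q != q)%N by apply/eqP; nia.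
    have e2 : (q * q != 1)%N by apply/eqP; nia.
    rewrite coef0 /trq -mulnn !coefD !coefXn coefX eqxx (negbTE e1) (negbTE e2).
    by rewrite addr0 addr0 => /eqP; rewrite oner_eq0.
  set c := Tf t.
  have Pc : sig c = c.
    by apply/eqP; rewrite -subr_eq0; apply/eqP; exact: PsiT.
  set s := y * sig t + (y + sig y) * sig (sig t).
  exists (- (s / c)).
  have yy : sig (sig y) = - sig y - y.
    have -> : sig (sig y) = Tf y - sig y - y by rewrite /Tf; ring.
    by rewrite Ty sub0r.
  have ss : sig s = sig y * sig (sig t) + (sig y + (- sig y - y)) * t.
    by rewrite /s sigD !sigM sigD sig3' yy.
  have sd : s - sig s = y * c by rewrite ss /s /c /Tf; ring.
  rewrite /Psi sigN sigM sigV Pc opprK addrC -mulrBl sd mulfK //.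
split.
- move=> fbij.
  have finj : injective (fun x => f.[x]) := bij_inj fbij.
  have [fi fK fiK] := fbij.
  split; last first.
    move=> u x y Hx Hy Heq; apply: (addrI u); apply: finj => /=.
    rewrite (fib u x (inFqP x Hx)) (fib u y (inFqP y Hy)); congr (_ + _); exact: Heq.
  have surj : forall y, root (trq F q) y ->
      exists2 x, root (trq F q) x & (L + (('X^q - 'X) \Po B)).[x] = y.
    move=> y; rewrite rootT => /eqP Ty; have [z Pz] := H90 y Ty.
    exists (Psi (fi z)); first by rewrite rootT TPsi.
    by rewrite -key (fiK z) Pz.
  have gin : forall x, root (trq F q) x -> root (trq F q) (L + (('X^q - 'X) \Po B)).[x].
    by move=> x; rewrite !rootT => /eqP Tx; apply/eqP; exact: gT.
  split => //.
  pose G := [set y | root (trq F q) y].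
  pose g := fun y => (L + (('X^q - 'X) \Po B)).[y].
  have sub : G \subset g @: G.
    apply/subsetP => y; rewrite inE => Hy; have [x Hx <-] := surj y Hy.
    by apply: imset_f; rewrite inE.
  have sub2 : g @: G \subset G.
    by apply/subsetP => _ /imsetP [x Hx ->]; rewrite inE in Hx; rewrite inE gin.
  have : #|g @: G| == #|G|.
    by rewrite eqn_leq leq_imset_card subset_leq_card.
  move/imset_injP => ginj x y Hx Hy Hxy; by apply: ginj; rewrite ?inE.
- case => [[gin ginj gsurj] hb]; apply: injF_bij => x y /= Hxy.
  have Pxy : Psi x = Psi y.
    by apply: ginj; rewrite ?rootT ?TPsi // -!key Hxy.
  have Pd : Psi (x - y) = 0.
    have -> : Psi (x - y) = Psi x - Psi y by rewrite /Psi sigB; ring.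
    by rewrite Pxy subrr.
  have inq : in_Fq q (x - y) by rewrite /in_Fq -subr_eq0; exact/eqP.
  have in0 : in_Fq (F:=F) q 0 by rewrite /in_Fq; apply/eqP; exact: sig0.
  have := hb y (x - y) 0 inq in0.
  have E : (L + (trq F q \Po C)).[y + (x - y)] = (L + (trq F q \Po C)).[y + 0].
    apply: (addIr B.[Psi y]); rewrite -!fib ?Pd ?Psi0 //.
    by rewrite (addrC y (x - y)) subrK addr0.
  by move=> /(_ E) /eqP; rewrite subr_eq0 => /eqP.
Qed.
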